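(* Let $k_+,k_-$ be integers with $0\le k_-\le k_+$. Let $\psi(x)$ denote the smallest prime not smaller than $x$ and set $p\triangleq\psi(k_++k_-+1)$. Let $m,t$ be positive integers such that $2t\le p^{\lceil m/2\rceil}-2$, and set $n=p^m-1$. Then $\mathbb{Z}^n$ can be lattice packed by $\mathcal{B}(n,t,k_+,k_-)$ with density \[\delta = \frac{\sum_{i=0}^t \binom{n}{i}(k_++k_-)^i}{(n+1)^{\lceil 2t(1-1/p)\rceil} }.\]
   Context: $\mathcal{B}(n,t,k_+,k_-)=\{\mathbf{x}\in\mathbb{Z}^n : -k_-\le x_i\le k_+ \text{ for all } i,\ \mathrm{wt}(\mathbf{x})\le t\}$, where $\mathrm{wt}$ is the Hamming weight. A lattice packing of $\mathbb{Z}^n$ by $\mathcal{B}$ is a lattice $\Lambda\subseteq\mathbb{Z}^n$ (additive subgroup) such that the translates $\mathbf{v}+\mathcal{B}$, $\mathbf{v}\in\Lambda$, are pairwise disjoint; its density is $|\mathcal{B}|/\mathrm{vol}(\Lambda)$, where $\mathrm{vol}(\Lambda)=|\mathbb{Z}^n/\Lambda|$. *)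

(* Defs.v *)
From mathcomp Require Import all_boot all_order all_algebra.
Set Implicit Arguments. Unset Strict Implicit. Unset Printing Implicit Defensive.
Import Order.TTheory GRing.Theory Num.Theory.
Local Open Scope ring_scope.

Definition wt n (x : 'rV[int]_n) : nat := #|[set i : 'I_n | x 0 i != 0]|.

Definition Bball n (t kp km : nat) (x : 'rV[int]_n) : Prop :=
  (forall i : 'I_n, - (km%:Z) <= x 0 i <= kp%:Z) /\ (wt x <= t)%N.

Definition is_lattice n (L : 'rV[int]_n -> Prop) : Prop :=
  L 0 /\ (forall u v, L u -> L v -> L (u - v)).

(* vol(L) = |Z^n / L| = N : there are exactly N cosets, given by
   representatives r 0, ..., r (N-1). *)
Definition lattice_index n (L : 'rV[int]_n -> Prop) (N : nat) : Prop :=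
  exists r : 'I_N -> 'rV[int]_n,
    (forall i j, L (r i - r j) -> i = j) /\
    (forall x, exists i, L (x - r i)).

Definition set_card n (S : 'rV[int]_n -> Prop) (N : nat) : Prop :=
  exists s : seq 'rV[int]_n, uniq s /\ size s = N /\ (forall x, x \in s <-> S x).

Definition lattice_packing n (L : 'rV[int]_n -> Prop) (B : 'rV[int]_n -> Prop) : Prop :=
  is_lattice L /\
  forall u v, L u -> L v -> u <> v -> forall x, ~ (B (x - u) /\ B (x - v)).

Lemma psi_ex (x : nat) : exists p, prime p && (x <= p)%N.
Proof.
case: (prime_above x) => p lt_xp pr_p; exists p; rewrite pr_p /=.
exact: ltnW.
Qed.
Definition psi (x : nat) : nat := ex_minn (psi_ex x).

(* Main.v *)
Require Import Defs.
From mathcomp Require Import all_boot all_order all_algebra all_field.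
From mathcomp Require Import cyclic.
From mathcomp Require Import zify ring lra.
Import Order.TTheory GRing.Theory Num.Theory.

Lemma cyc (p m j j' l : nat) : prime p -> (0 < m)%N ->
  (j < p ^ uphalf m)%N -> (j' < p ^ uphalf m)%N ->
  ~~ (p %| j) -> ~~ (p %| j') -> (l < m)%N ->
  (j * p ^ l) %% (p ^ m - 1) = j' -> l = 0%N.
Proof.
move=> pp m0 hj hj' pj pj' lm E.
case: (posnP l) => // l0; exfalso.
have p1 : (1 < p)%N by apply: prime_gt1.
have hm : (uphalf m <= m)%N.
  rewrite uphalf_half; move: (odd_double_half m); case: (odd m) => /=; lia.
have h2 : (uphalf m + uphalf m <= m + 1)%N.
  rewrite uphalf_half; move: (odd_double_half m); case: (odd m) => /=; lia.
have pm1 : (0 < p ^ m)%N by rewrite expn_gt0 ltnW.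
have pl : p %| p ^ l by rewrite dvdn_exp.
have pmd : p %| p ^ m by rewrite dvdn_exp.
case: (leqP (l + uphalf m) m) => hl.
- have A : (j * p ^ l < p ^ m)%N.
    apply: (leq_trans (n := p ^ uphalf m * p ^ l)); first by rewrite ltn_pmul2r // expn_gt0 ltnW.
    by rewrite -expnD addnC leq_exp2l.
  have B : j * p ^ l != p ^ m - 1.
    apply/eqP => e.
    have H : p %| p ^ m - 1 by rewrite -e dvdn_mull.
    have := dvdn_sub pmd H; rewrite subKn // dvdn1 => /eqP p1e.
    by move: p1; rewrite p1e.
  rewrite modn_small in E; last by move: A B; clear; lia.
  by move: pj'; rewrite -E dvdn_mull.
- set e := (m - l)%N.
  have me : m = (l + e)%N by rewrite /e; move: lm; clear; lia.
  have hle : (uphalf m <= l)%N by move: hl h2; clear; lia.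
  have e0 : (0 < e)%N by rewrite /e; move: lm; clear; lia.
  set P := p ^ l; set Q := p ^ e.
  have PQ : p ^ m = (P * Q)%N by rewrite me expnD.
  have hP : (p ^ uphalf m <= P)%N by rewrite leq_exp2l.
  have Q0 : (0 < Q)%N by rewrite expn_gt0 ltnW.
  have P0 : (0 < P)%N by rewrite expn_gt0 ltnW.
  have jd := divn_eq j Q.
  set a := j %/ Q in jd; set b := j %% Q in jd.
  have bQ : (b < Q)%N by rewrite ltn_mod.
  have b0 : (0 < b)%N.
    rewrite lt0n; apply/negP => /eqP b0; move: pj.
    rewrite jd b0 addn0 dvdn_mull // /Q; rewrite -(prednK e0) expnS dvdn_mulr //.
  have aP : (a < P)%N.
    have : (a * Q < P * Q)%N.
      apply: (leq_ltn_trans (n := j)); first by rewrite jd leq_addr.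
      by apply: (leq_trans hj); rewrite -PQ leq_exp2l.
    by rewrite ltn_pmul2r.
  have E2 : (j * P = a * (P * Q - 1) + (a + b * P))%N.
    have H : (a * (P * Q) = a * (P * Q - 1) + a)%N.
      by rewrite mulnBr muln1 subnK // leq_pmulr // muln_gt0 P0.
    by rewrite jd mulnDl -mulnA (mulnC Q P) H addnA.
  rewrite PQ E2 modnMDl in E.
  have bP : (b * P + P <= P * Q)%N by rewrite addnC -mulSn mulnC leq_mul2l bQ orbT.
  have S : (a + b * P <= P * Q - 1)%N by move: aP bP; clear; lia.
  case: (ltnP (a + b * P) (P * Q - 1)) => S2.
  + rewrite modn_small // in E.
    have : (P <= b * P)%N by rewrite leq_pmull.
    move: E hj' hP; clear; lia.
  + have : (a + b * P = P * Q - 1)%N by move: S S2; clear; lia.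
    move=> S3; rewrite S3 modnn in E; by move: pj'; rewrite -E dvdn0.
Qed.


Section Count.
Variables (aT rT : finType) (y : rT).
Definition supp (f : {ffun aT -> rT}) := [set x | f x != y].

Lemma card_supp_eq (D : {set aT}) :
  #|[set f | supp f == D]| = (#|rT|.-1) ^ #|D|.
Proof.
rewrite -(cardC1 y) -(card_pffun_on y D (predC1 y)).
apply: eq_card => f; rewrite inE; apply/eqP/pffun_onP => [<-|[H1 H2]].
  split; first by apply/subsetP => x; rewrite /supp inE.
  by move=> z /imageP[x xs ->]; move: xs; rewrite /supp !inE.
apply/setP => x; rewrite inE; apply/idP/idP => [|xD].
  by move=> fx; apply: (subsetP H1).
have := H2 (f x) (map_f _ _); rewrite !inE; apply.
by rewrite mem_enum.
Qed.

Lemma card_supp_size i :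
  #|[set f | #|supp f| == i]| = ('C(#|aT|, i) * (#|rT|.-1) ^ i)%N.
Proof.
rewrite -sum1dep_card (partition_big supp (fun D : {set aT} => #|D| == i)) //=.
rewrite -card_draws -sum_nat_const; apply: eq_big => [D|D /eqP Di].
  by rewrite inE.
rewrite -Di -card_supp_eq -sum1dep_card; apply: eq_bigl => f.
by case: (supp f =P D) => [->|]; rewrite ?eqxx ?andbF.
Qed.

Lemma card_supp_le t :
  #|[set f | #|supp f| <= t]| = \sum_(i < t.+1) ('C(#|aT|, i) * (#|rT|.-1) ^ i)%N.
Proof.
rewrite -sum1dep_card (partition_big (fun f => inord #|supp f| : 'I_t.+1) xpredT) //=.
apply: eq_bigr => j _; rewrite -card_supp_size -sum1dep_card; apply: eq_bigl => f.
case: (leqP #|supp f| t) => h /=.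
  apply/eqP/eqP => [<-|e]; first by rewrite inordK.
  by apply: val_inj; rewrite /= inordK.
by apply/esym/eqP => e; move: h; rewrite e ltnNge -ltnS ltn_ord.
Qed.
End Count.

Local Open Scope ring_scope.

Lemma ceil_lem (p T : nat) : (0 < p)%N ->
  Num.ceil ((T%:R * (1 - (p%:R)^-1)) : rat) = (T - T %/ p)%N%:Z.
Proof.
move=> p0.
have pq : (p%:R : rat) != 0 by rewrite pnatr_eq0 -lt0n.
have E : (T%:R * (1 - (p%:R)^-1) : rat) = (T - T %/ p)%N%:R - (T %% p)%:R / p%:R.
  rewrite natrB ?leq_div //.
  have -> : (T%:R : rat) = (T %/ p)%:R * p%:R + (T %% p)%:R by rewrite -natrM -natrD -divn_eq.
  set q := (T %/ p)%:R; set r := (T %% p)%:R.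
  field; done.
apply: ceil_def; rewrite E; apply/andP; split.
- rewrite intrB /= -[_%:~R]/(_%:R) ltrBlDr -addrA ltrDl.
  rewrite addrC subr_gt0 ltr_pdivrMr ?ltr0n // mul1r ltr_nat ltn_pmod //.
- rewrite -[_%:~R]/(_%:R) gerBl divr_ge0 //.
Qed.

Lemma ball_card n t kp km :
  set_card (@Bball n t kp km) (\sum_(i < t.+1) ('C(n, i) * (kp + km) ^ i))%N.
Proof.
pose y : 'I_(kp + km).+1 := inord km.
pose g (f : {ffun 'I_n -> 'I_(kp + km).+1}) : 'rV[int]_n :=
  \row_i ((f i : nat)%:Z - km%:Z).
have gE f i : g f 0 i = (f i : nat)%:Z - km%:Z by rewrite mxE.
have suppE f : [set i | g f 0 i != 0] = @supp _ _ y f.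
  apply/setP => i; rewrite !inE gE subr_eq0; congr negb.
  have kmlt : (km < (kp + km).+1)%N by rewrite ltnS leq_addl.
  rewrite eqz_nat /y; apply/eqP/eqP => [e|->]; last by rewrite inordK.
  by apply: val_inj; rewrite /= inordK // e.
have ginj : injective g.
  move=> f1 f2 e; apply/ffunP => i; apply: val_inj.
  have := congr1 (fun x : 'rV[int]_n => x 0 i) e; rewrite /= !gE.
  by move/addIr => /eqP; rewrite eqz_nat => /eqP.
exists [seq g f | f <- enum [set f : {ffun 'I_n -> 'I_(kp + km).+1} | (#|@supp _ _ y f| <= t)%N]]; split; [|split].
- by rewrite map_inj_uniq ?enum_uniq.
- by rewrite size_map -cardE card_supp_le card_ord card_ord.
move=> x; split.
- move=> /mapP[f]; rewrite mem_enum inE => hf ->; split.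
    move=> i; rewrite gE; have := ltn_ord (f i); move: (nat_of_ord (f i)) => v hv; apply/andP; split; lia.
  by rewrite /wt suppE.
- move=> [hb hw]; apply/mapP.
  pose f := [ffun i => (inord (absz (x 0 i + km%:Z)) : 'I_(kp + km).+1)].
  have gf : g f = x.
    apply/rowP => i; have /andP[h1 h2] := hb i; rewrite gE ffunE; set v := x 0 i in h1 h2 *.
    rewrite inordK; first by rewrite gez0_abs ?addrK //; lia.
    by rewrite -ltz_nat gez0_abs; lia.
  exists f; last by [].
  by rewrite mem_enum inE -suppE gf.
Qed.

Section Main.
Variables (F : finFieldType) (p m t : nat).
Hypothesis pcharF : p \in [pchar F].
Hypothesis cardF : #|F| = (p ^ m)%N.
Hypothesis m0 : (0 < m)%N.
Local Notation n := (p ^ m - 1)%N.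
Variable z : F.
Hypothesis zprim : n.-primitive_root z.

Lemma pprime : prime p. Proof. exact: pcharf_prime pcharF. Qed.

Lemma expF (y : F) : y ^+ (p ^ m) = y.
Proof. by rewrite -cardF expf_card. Qed.

Lemma frobE (y : F) : pFrobenius_aut pcharF y = y ^+ p.
Proof. by []. Qed.

Lemma frob_int (c : int) : (c%:~R : F) ^+ p = c%:~R.
Proof. by rewrite -frobE rmorph_int. Qed.

Lemma natn : (n%:R : F) = -1.
Proof.
have pm : (0 < p ^ m)%N by rewrite expn_gt0 prime_gt0 // pprime.
have h : ((n + 1)%N%:R : F) = 0.
  by rewrite subnK // ; apply/eqP; rewrite -(dvdn_pcharf pcharF) dvdn_exp.
by apply/eqP; rewrite -addr_eq0; rewrite natrD in h; rewrite h.
Qed.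

Definition syn j (x : 'rV[int]_n) : F := \sum_(i < n) (x 0 i)%:~R * z ^+ (i * j).

Lemma synB j x y : syn j (x - y) = syn j x - syn j y.
Proof.
rewrite /syn -sumrB; apply: eq_bigr => i _.
by rewrite !mxE intrB mulrBl.
Qed.

Lemma syn_frob j x : syn (j * p) x = (syn j x) ^+ p.
Proof.
rewrite /syn -frobE rmorph_sum; apply: eq_bigr => i _.
by rewrite rmorphM /= rmorph_int frobE -exprM mulnA.
Qed.


Definition Jseq := [seq j <- iota 1 (2 * t) | ~~ (p %| j)%N].

Lemma memJ j : (j \in Jseq) = ~~ (p %| j)%N && (0 < j <= 2 * t)%N.
Proof. by rewrite mem_filter mem_iota add1n ltnS. Qed.

Lemma syn_all (d : 'rV[int]_n) : (forall j, j \in Jseq -> syn j d = 0) ->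
  forall j, (0 < j <= 2 * t)%N -> syn j d = 0.
Proof.
move=> h; elim/ltn_ind => j IH /andP[j0 jt].
case pj : (p %| j)%N; last by apply: h; rewrite memJ pj j0 jt.
have p0 : (0 < p)%N by rewrite prime_gt0 // pprime.
have p1 : (1 < p)%N by rewrite prime_gt1 // pprime.
rewrite -(divnK pj) syn_frob IH.
- by rewrite expr0n gtn_eqF.
- by rewrite ltn_Pdiv.
- by rewrite divn_gt0 // dvdn_leq //= (leq_trans _ jt) // leq_div.
Qed.

Lemma int_cast0 (c : int) : (`|c| < p)%N -> (c%:~R : F) = 0 -> c = 0.
Proof.
case: c => [c|c] /= hc.
  move/eqP; rewrite -(dvdn_pcharf pcharF); case: c hc => // c' hc.
  by move=> /(dvdn_leq (ltn0Sn _)); lia.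
rewrite NegzE mulrNz => /eqP; rewrite oppr_eq0 -(dvdn_pcharf pcharF).
by move=> /(dvdn_leq (ltn0Sn _)); lia.
Qed.

Lemma z_neq0 : z != 0.
Proof.
apply/eqP => z0; have := prim_expr_order zprim; rewrite z0 expr0n.
by rewrite eqn0Ngt (prim_order_gt0 zprim) => /eqP; rewrite eq_sym oner_eq0.
Qed.

Lemma zexp_inj (i k : 'I_n) : z ^+ i = z ^+ k -> i = k.
Proof.
move/eqP; rewrite (eq_prim_root_expr zprim) !modn_small // => /eqP e.
exact: val_inj.
Qed.

Lemma bch (d : 'rV[int]_n) : (forall i, `|d 0%R i| < p)%N -> (wt d <= 2 * t)%N ->
  (forall j, j \in Jseq -> syn j d = 0) -> d = 0.
Proof.
move=> hd hw hJ; have hall := @syn_all d hJ.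
pose T := [set i : 'I_n | (d 0 i)%:~R != 0 :> F].
have TW : (#|T| <= 2 * t)%N.
  apply: leq_trans hw; apply: subset_leq_card; apply/subsetP => i.
  by rewrite !inE; apply: contra => /eqP ->.
suff T0 : T = set0.
  apply/rowP => i; rewrite mxE; apply: int_cast0 => //.
  by apply/eqP; move/setP: T0 => /(_ i); rewrite !inE => /negbFE.
apply/setP => k; rewrite in_set0; apply: negbTE; apply/negP => kT.
pose A := T :\ k.
pose P := 'X * \prod_(i <- enum A) ('X - (z ^+ i)%:P).
have sP : (size P <= (2 * t).+1)%N.
  rewrite /P mulrC size_mulX; last by rewrite monic_neq0 // monic_prod_XsubC.
  rewrite size_prod_XsubC -cardE ltnS; apply: leq_trans TW.
  by rewrite /A (cardsD1 k T) kT.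
have S0 : \sum_(i < n) (d 0 i)%:~R * P.[z ^+ i] = 0.
  under eq_bigr => i _ do rewrite (horner_coef_wide _ sP) mulr_sumr.
  rewrite exchange_big /= big1 // => j _.
  under eq_bigr => i _ do rewrite mulrCA -exprM.
  rewrite -mulr_sumr; case: (posnP j) => [->|j0].
    by rewrite coefXM eqxx mul0r.
  by rewrite /syn in hall; rewrite hall ?mulr0 // j0 -ltnS ltn_ord.
move: S0; rewrite (bigD1 k) //= big1 ?addr0 => [|i ik].
  apply/eqP; rewrite mulf_eq0 negb_or; move: kT; rewrite inE => -> /=; rewrite /P hornerM hornerX horner_prod.
  rewrite mulf_neq0 ?expf_neq0 ?z_neq0 // prodf_seq_neq0; apply/allP => i.
  rewrite mem_enum /A !inE => /andP[ik _] /=.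
  rewrite hornerXsubC subr_eq0; apply/eqP => /zexp_inj e.
  by move: ik; rewrite e eqxx.
case iT : (i \in T).
  rewrite /P hornerM horner_prod (bigD1_seq i) /= ?hornerXsubC ?subrr ?mul0r ?mulr0 //.
    by rewrite mem_enum /A in_setD1 ik iT.
  exact: enum_uniq.
by move: iT; rewrite inE => /negbFE/eqP ->; rewrite mul0r.
Qed.


Lemma fixed_nat (y : F) : y ^+ p = y -> exists c : nat, y = c%:R.
Proof.
move=> hy; case: (pickP (fun c : 'I_p => y == (c : nat)%:R)) => [c /eqP -> | hn].
  by exists c.
exfalso.
have p1 : (1 < p)%N by rewrite prime_gt1 // pprime.
pose rs := y :: [seq (i%:R : F) | i <- iota 0 p].
have nz : ('X^p - 'X : {poly F}) != 0.
  by rewrite -size_poly_eq0 size_polyDl ?size_polyXn // size_polyN size_polyX ltnS.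
have sz : size ('X^p - 'X : {poly F}) = p.+1.
  by rewrite size_polyDl ?size_polyXn // size_polyN size_polyX ltnS.
have H1 : all (root ('X^p - 'X)) rs.
  apply/allP => w; rewrite inE => /orP[/eqP ->|/mapP[i _ ->]];
    rewrite rootE !hornerE ?hy ?subrr //.
  by rewrite -frobE pFrobenius_aut_nat subrr.
have H2 : uniq rs.
  rewrite /rs /= map_inj_in_uniq ?iota_uniq ?andbT.
    apply/negP => /mapP[i]; rewrite mem_iota add0n => /andP[_ ip] e.
    by have := hn (Ordinal ip); rewrite /= e eqxx.
  move=> i j; rewrite !mem_iota /= !add0n => ip jp e.
  wlog ij : i j ip jp e / (i <= j)%N.
    move=> W; case: (leqP i j) => h; [exact: W|]. apply/esym; apply: W => //. exact: ltnW.
  have : ((j - i)%N%:R : F) == 0 by rewrite natrB // e subrr.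
  rewrite -(dvdn_pcharf pcharF); case: (posnP (j - i)) => [h0 _|hp /(dvdn_leq hp)]; lia.
have := max_poly_roots nz H1 H2.
by rewrite sz /= size_map size_iota ltnn.
Qed.

Lemma geom e : \sum_(i < n) z ^+ (i * e) = if (n %| e)%N then n%:R else 0.
Proof.
case: ifP => h.
  rewrite (eq_bigr (fun _ => 1)) ?sumr_const ?card_ord // => i _.
  by rewrite mulnC exprM; move: h; rewrite (prim_order_dvd zprim) => /eqP ->; rewrite expr1n.
have w1 : z ^+ e - 1 != 0 by rewrite subr_eq0 -(prim_order_dvd zprim) h.
have E : (z ^+ e - 1) * \sum_(i < n) z ^+ (i * e) = 0.
  rewrite (eq_bigr (fun i : 'I_n => (z ^+ e) ^+ i)); last by move=> i _; rewrite -exprM mulnC.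
  by rewrite -subrX1 -exprM mulnC exprM (prim_expr_order zprim) expr1n subrr.
by move/eqP: E; rewrite mulf_eq0 (negbTE w1) /= => /eqP.
Qed.

Definition Tr (w : F) := \sum_(l < m) w ^+ (p ^ l).

Lemma Tr_frob w : Tr w ^+ p = Tr w.
Proof.
rewrite /Tr -frobE rmorph_sum /=.
under eq_bigr => l _ do rewrite frobE -exprM -expnSr.
have H : \sum_(l < m.+1) w ^+ (p ^ l) = \sum_(l < m) w ^+ (p ^ l) + w ^+ (p ^ m).
  by rewrite big_ord_recr.
rewrite big_ord_recl /= expF expn0 expr1 in H.
rewrite (eq_bigr (fun i : 'I_m => w ^+ (p ^ (lift ord0 i)))); last by move=> i _; rewrite lift0.
by apply: (addrI w); rewrite H addrC.
Qed.


Hypothesis ht : (2 * t <= p ^ uphalf m - 2)%N.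

Local Notation s := (size Jseq).
Local Notation J k := (nth 0%N Jseq k).

Lemma Jprops j : j \in Jseq ->
  [/\ ~~ (p %| j)%N, (0 < j)%N, (j < p ^ uphalf m)%N & (j < n)%N].
Proof.
rewrite memJ => /andP[pj /andP[j0 jt]].
have p1 : (1 < p)%N by rewrite prime_gt1 // pprime.
have hm : (uphalf m <= m)%N.
  rewrite uphalf_half; move: (odd_double_half m); case: (odd m) => /=; lia.
have hpm : (p ^ uphalf m <= p ^ m)%N by rewrite leq_exp2l.
split => //; move: j0 jt ht hpm; clear; lia.
Qed.

Lemma Juniq : uniq Jseq.
Proof. by rewrite filter_uniq // iota_uniq. Qed.

Lemma Jdiv (k k' : 'I_s) (l : 'I_m) :
  (n %| J k * (n - 1) * p ^ l + J k')%N = (k == k') && (l == 0%N :> nat).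
Proof.
have [pk k0 kh kn] := @Jprops _ (mem_nth 0%N (ltn_ord k)).
have [pk' k0' kh' kn'] := @Jprops _ (mem_nth 0%N (ltn_ord k')).
have n0 : (0 < n)%N by move: k0 kn; clear; lia.
have E1 : forall a, (a * (n - 1) + a = a * n)%N.
  by move=> a; rewrite -mulnSr subn1 prednK.
apply/idP/idP.
- move=> hd.
  have E : ((J k * p ^ l) %% n = J k')%N.
    have h1 : ((J k * (n - 1) * p ^ l + J k' + J k * p ^ l) %% n = (J k * p ^ l) %% n)%N.
      by rewrite -modnDml (eqP hd) add0n.
    rewrite -h1 addnAC mulnAC E1 modnMDl modn_small //.
  have l0 := @cyc p m (J k) (J k') l pprime m0 kh kh' pk pk' (ltn_ord l) E.
  rewrite l0 expn0 muln1 modn_small // in E.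
  apply/andP; split; last by rewrite l0.
  by apply/eqP/val_inj/eqP; rewrite /= -(nth_uniq 0%N (ltn_ord k) (ltn_ord k') Juniq) E.
- move=> /andP[/eqP <- /eqP ->]; rewrite expn0 muln1 E1.
  exact: dvdn_mull.
Qed.

Definition H0 (x : 'rV[int]_n) : {ffun 'I_s -> F} := [ffun k : 'I_s => syn (J k) x].

Lemma H0B x y : H0 (x - y) = H0 x - H0 y.
Proof. by apply/ffunP => k; rewrite !ffunE synB. Qed.


Lemma H0_surj (f : {ffun 'I_s -> F}) : exists x, H0 x = f.
Proof.
pose yv (i : 'I_n) := - \sum_(k < s) Tr (f k * z ^+ (i * (J k * (n - 1)))).
have hy i : yv i ^+ p = yv i.
  rewrite /yv -frobE rmorphN rmorph_sum /=; congr (- _).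
  by apply: eq_bigr => k _; rewrite frobE Tr_frob.
have [c hc] := fin_all_exists (fun i => @fixed_nat _ (hy i)).
exists (\row_i (c i)%:Z).
apply/ffunP => k'; rewrite ffunE /syn.
have T1 : forall k (i : 'I_n) l, (f k * z ^+ (i * (J k * (n - 1)))) ^+ (p ^ l) * z ^+ (i * J k')
   = f k ^+ (p ^ l) * z ^+ (i * (J k * (n - 1) * p ^ l + J k')).
  by move=> k i l; rewrite exprMn -exprM -mulrA -exprD mulnDr !mulnA.
under eq_bigr => i _ do rewrite mxE -[((c i)%:Z)%:~R]/((c i)%:R) -hc /yv mulNr mulr_suml.
rewrite sumrN exchange_big /=.
under eq_bigr => k _ do under eq_bigr => i _ do rewrite /Tr mulr_suml.
rewrite (eq_bigr (fun k => \sum_(i < n) \sum_(l < m)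
   f k ^+ (p ^ l) * z ^+ (i * (J k * (n - 1) * p ^ l + J k')))); last first.
  by move=> k _; apply: eq_bigr => i _; apply: eq_bigr => l _; exact: T1.
under eq_bigr => k _ do rewrite exchange_big /=.
under eq_bigr => k _ do under eq_bigr => l _ do rewrite -mulr_sumr geom Jdiv.
rewrite (bigD1 k') //= [X in - (_ + X)]big1 ?addr0 => [|k kk']; last first.
  by apply: big1 => l _; rewrite (negbTE kk') /= mulr0.
rewrite (bigD1 (Ordinal m0)) //= [X in - (_ + X)]big1 ?addr0 => [|l l0]; last first.
  rewrite eqxx /=; case: eqP => [e|_]; last by rewrite mulr0.
  by case/eqP: l0; apply: val_inj.
by rewrite eqxx /= expn0 expr1 natn mulrN1 opprK.
Qed.

End Main.

Lemma count_dvd p N : (0 < p)%N ->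
  count (fun j => (p %| j)%N) (iota 1 N) = (N %/ p)%N.
Proof.
move=> p0; elim: N => [|N IH]; first by rewrite div0n.
have E : iota 1 N.+1 = iota 1 N ++ iota (1 + N) 1 by rewrite -iotaD addn1.
by rewrite E count_cat IH /= addn0 add1n divnS // addnC.
Qed.

Lemma size_J p t : (0 < p)%N ->
  size [seq j <- iota 1 (2 * t) | ~~ (p %| j)%N] = (2 * t - (2 * t) %/ p)%N.
Proof.
move=> p0; rewrite size_filter.
have E := count_predC (fun j => (p %| j)%N) (iota 1 (2 * t)).
rewrite count_dvd // size_iota in E.
have -> : count (fun j => ~~ (p %| j)%N) (iota 1 (2 * t)) =
  count (predC (fun j => (p %| j)%N)) (iota 1 (2 * t)) by apply: eq_count.
by move: E; move: (count (predC _) _) => a; lia.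
Qed.

Lemma index_of_surj n (G : finType) (H : 'rV[int]_n -> G) (g0 : G) :
  (forall x y, H (x - y) = g0 <-> H x = H y) ->
  (forall g, exists x, H x = g) ->
  lattice_index (fun x => H x = g0) #|G|.
Proof.
move=> Hs surj; have [r hr] := fin_all_exists surj.
exists (fun i => r (enum_val i)); split.
  by move=> i j /Hs; rewrite !hr => /enum_val_inj.
move=> x; exists (enum_rank (H x)); apply/Hs.
by rewrite hr enum_rankK.
Qed.

Theorem corollary2 (kp km p m t : nat) :
  (km <= kp)%N ->
  p = psi (kp + km + 1) ->
  (0 < m)%N -> (0 < t)%N ->
  (2 * t <= p ^ uphalf m - 2)%N ->
  exists (L : 'rV[int]_(p ^ m - 1) -> Prop) (V M : nat),
    lattice_packing L (Bball t kp km) /\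
    lattice_index L V /\
    set_card (@Bball (p ^ m - 1) t kp km) M /\
    (M%:R / V%:R : rat) =
      (\sum_(i < t.+1) ('C(p ^ m - 1, i) * (kp + km) ^ i)%N%:R)
      / ((p ^ m - 1).+1%:R ^ Num.ceil ((2 * t)%:R * (1 - (p%:R)^-1) : rat)).
Proof.
move=> hk hp m0 t0 ht.
have [pp pge] : prime p /\ (kp + km + 1 <= p)%N.
  by rewrite hp /psi; case: ex_minnP => q /andP[a b] _; split.
have p0 : (0 < p)%N by rewrite prime_gt0.
have [Fm pch cardFm] := pPrimePowerField pp m0.
have pm1 : (1 < p ^ m)%N by rewrite -(expn0 p) ltn_exp2l // prime_gt1.
pose rs := [seq x <- enum Fm | x != 0].
have /hasP[z _ zprim] : has (p ^ m - 1).-primitive_root rs.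
  apply: has_prim_root.
  - by rewrite subn_gt0.
  - apply/allP => x; rewrite mem_filter => /andP[x0 _]; rewrite unity_rootE.
    apply/eqP; apply: (mulfI x0); rewrite mulr1 -exprS subn1 prednK ?(ltnW pm1) //.
    by rewrite -cardFm expf_card.
  - by rewrite filter_uniq // enum_uniq.
  - have -> : size rs = #|predC1 (0 : Fm)|.
      rewrite cardE; apply: perm_size; apply: uniq_perm.
      + by rewrite filter_uniq // enum_uniq.
      + exact: enum_uniq.
      + by move=> x; rewrite mem_filter !mem_enum andbT.
    by rewrite cardC1 cardFm subn1.
pose H := @H0 Fm p m t z.
exists (fun x => H x = 0), #|{ffun 'I_(size (Jseq p t)) -> Fm}|,
  (\sum_(i < t.+1) ('C(p ^ m - 1, i) * (kp + km) ^ i))%N.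
have HB : forall x y, H (x - y) = H x - H y by move=> x y; exact: H0B.
split; [|split; [|split]].
- split.
    split; first by have := HB 0 0; rewrite subr0 subrr.
    by move=> u v hu hv; rewrite HB hu hv subrr.
  move=> u v hu hv uv x [[b1 w1] [b2 w2]].
  apply: uv; apply/eqP; rewrite -subr_eq0; apply/eqP.
  have hd : u - v = (x - v) - (x - u) by rewrite opprB [RHS]addrC addrA subrK.
  apply: (@bch Fm p m t pch cardFm m0 z zprim).
  + rewrite hd => i; rewrite !mxE; have /andP[l1 u1] := b1 i; have /andP[l2 u2] := b2 i.
    rewrite !mxE in l1 u1 l2 u2.
    rewrite -ltz_nat abszE; move: l1 u1 l2 u2 pge; clear.
    set a := x 0 i; set b := u 0 i; set c := v 0 i => l1 u1 l2 u2 pge.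
    have : `|a - c - (a - b)| <= (kp + km)%:Z.
      rewrite ler_norml; apply/andP; split; lia.
    by move=> h; apply: (le_lt_trans h); rewrite ltz_nat; lia.
  + rewrite hd mul2n -addnn; apply: leq_trans (leq_add w2 w1); rewrite /wt.
    apply: leq_trans (leq_card_setU _ _); apply: subset_leq_card.
    apply/subsetP => i; rewrite !inE !mxE; apply: contraR.
    by rewrite negb_or !negbK => /andP[/eqP -> /eqP ->]; rewrite subrr.
  + move=> j jJ; have hidx : (index j (Jseq p t) < size (Jseq p t))%N by rewrite index_mem.
    have := congr1 (fun f : {ffun _ -> _} => f (Ordinal hidx)) (HB u v).
    rewrite hu hv subrr /H /H0 !ffunE /= nth_index // => ->; done.
- apply: index_of_surj.
    by move=> x y; rewrite HB; split => [/eqP|->]; [rewrite subr_eq0 => /eqP|rewrite subrr].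
  exact: (@H0_surj Fm p m t pch cardFm m0 z zprim ht).
- exact: ball_card.
- rewrite card_ffun card_ord cardFm natr_sum size_J // ceil_lem // subn1 prednK ?expn_gt0 ?p0 //.
  by rewrite natrX.
Qed.
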